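(* If every ample class is dismantlable, then for every $n$ the cross-polytope $O_n$ is extendably shellable.
   Context: For a finite set $X$, a concept class is $C\subseteq 2^X$; $Y\subseteq X$ is shattered by $C$ if $\{c\cap Y:c\in C\}=2^Y$. A cube of $2^X$ is $\{T\cup Z:Z\subseteq Y\}$ with $Y\subseteq X$, $T\subseteq X\setminus Y$ ($Y$ its support); $C$ is ample if every set shattered by $C$ is the support of a cube contained in $C$. $C$ is dismantlable if it admits an ordering $c_1,\dots,c_m$ of all its concepts such that every level set $\{c_1,\dots,c_i\}$ is ample. With $\pm X=\{\pm x_1,\dots,\pm x_n\}$, the cross-polytope $O_n$ is the simplicial complex whose facets are the sets $\sigma\subseteq\pm X$ containing exactly one of $+x_i,-x_i$ for each $i$. A partial shelling is a sequence $\sigma_1,\dots,\sigma_m$ of distinct facets such that for each $2\le j\le m$ the family $2^{\sigma_j}\cap\bigcup_{i<j}2^{\sigma_i}$ is a pure complex whose maximal sets all have size $n-1$; a shelling is a partial shelling containing all facets. $O_n$ is extendably shellable if every partial shelling can be extended to a shelling. *)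

(* Defs.v *)
From mathcomp Require Import all_boot.
Set Implicit Arguments. Unset Strict Implicit. Unset Printing Implicit Defensive.

Section Ample.
Variable X : finType.

Definition shatters (C : {set {set X}}) (Y : {set X}) : bool :=
  [set c :&: Y | c in C] == powerset Y.

Definition cube (Y T0 : {set X}) : {set {set X}} :=
  [set T0 :|: Z | Z in powerset Y].

Definition ample (C : {set {set X}}) : Prop :=
  forall Y : {set X}, shatters C Y ->
    exists T0 : {set X}, T0 \subset ~: Y /\ cube Y T0 \subset C.

Definition dismantlable (C : {set {set X}}) : Prop :=
  exists s : seq {set X},
    [/\ uniq s, (forall c, (c \in s) = (c \in C)) &
        forall i, 0 < i <= size s -> ample [set c in take i s]].
End Ample.

Section CrossPolytope.
Variable n : nat.
(* vertex (i, true) = +x_i, (i, false) = -x_i *)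
Local Notation pmX := ('I_n * bool)%type.

Definition cp_facet (sigma : {set pmX}) : bool :=
  [forall i : 'I_n, ((i, true) \in sigma) != ((i, false) \in sigma)].

Definition inter_family (prev : seq {set pmX}) (sj : {set pmX}) : {set {set pmX}} :=
  [set tau : {set pmX} | (tau \subset sj) && has (fun si : {set pmX} => tau \subset si) prev].

Definition pure_codim1 (F : {set {set pmX}}) : Prop :=
  forall tau, maxset (fun B => B \in F) tau -> #|tau| = n.-1.

Definition partial_shelling (s : seq {set pmX}) : Prop :=
  [/\ all cp_facet s, uniq s &
      forall j, 0 < j < size s ->
        pure_codim1 (inter_family (take j s) (nth set0 s j))].

Definition shelling (s : seq {set pmX}) : Prop :=
  partial_shelling s /\ forall sigma, cp_facet sigma -> sigma \in s.

Definition extendably_shellable : Prop :=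
  forall s, partial_shelling s -> exists t, shelling (s ++ t).
End CrossPolytope.

(* Main.v *)
Require Import Defs.
From mathcomp Require Import all_boot zify.
Set Implicit Arguments. Unset Strict Implicit. Unset Printing Implicit Defensive.

Ltac sg := match goal with |- ?g => idtac g end.
Ltac bsolve := repeat (match goal with |- context [?x \in ?A] => case: (x \in A) end); rewrite //=.

Section AmpleTheory.
Variable X : finType.
Implicit Types (C : {set {set X}}) (B Z Y T c e q p r V : {set X}).

Lemma shattersP C Y :
  reflect (forall B, B \subset Y -> exists2 c, c \in C & c :&: Y = B)
          (shatters C Y).
Proof.
apply: (iffP eqP) => [E B BY|H].
  have : B \in [set c :&: Y | c in C] by rewrite E powersetE.
  by case/imsetP=> c cC ->; exists c.
apply/eqP; rewrite eqEsubset; apply/andP; split.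
  by apply/subsetP=> B /imsetP[c _ ->]; rewrite powersetE subsetIr.
apply/subsetP=> B; rewrite powersetE => /H[c cC <-]; exact: imset_f.
Qed.

Lemma shatP C Y : shatters C Y ->
  forall B : {set X}, B \subset Y -> exists2 c, c \in C & c :&: Y = B.
Proof. by move/shattersP. Qed.
Arguments shatP [C Y] _ B _.

Lemma not_shatters C Y : ~~ shatters C Y ->
  exists2 B : {set X}, B \subset Y & forall c, c \in C -> c :&: Y != B.
Proof.
move=> ns.
have : ~~ [forall B : {set X}, (B \subset Y) ==> [exists c, (c \in C) && (c :&: Y == B)]].
  apply: contra ns => /forallP H; apply/shattersP => B BY.
  by have /implyP/(_ BY)/existsP[c /andP[cC /eqP e]] := H B; exists c.
rewrite negb_forall => /existsP[B]; rewrite negb_imply => /andP[BY nE].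
exists B => // c cC; apply: contra nE => e; apply/existsP; exists c; by rewrite cC.
Qed.

Lemma cube_sub C Y T :
  (forall Z, Z \subset Y -> T :|: Z \in C) -> cube Y T \subset C.
Proof.
by move=> H; apply/subsetP=> x /imsetP[Z]; rewrite powersetE => ZY ->; apply: H.
Qed.

Lemma cube_mem C Y T Z : cube Y T \subset C -> Z \subset Y -> T :|: Z \in C.
Proof.
by move=> /subsetP H ZY; apply: H; apply/imsetP; exists Z; rewrite ?powersetE.
Qed.

Lemma strong_shat C Y T : T \subset ~: Y -> cube Y T \subset C ->
  ~~ shatters (~: C) (~: Y).
Proof.
move=> TY cu; apply/negP => /shattersP/(_ T TY) [e]; rewrite inE => /negP eC eY; apply: eC.
have -> : e = T :|: (e :&: Y).
  apply/setP=> y; rewrite !inE; move/setP: eY => /(_ y); rewrite !inE.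
  by case: (y \in Y); case: (y \in e); case: (y \in T).
apply: cube_mem cu _; exact: subsetIr.
Qed.

Lemma shat_strong C Y : ~~ shatters (~: C) (~: Y) ->
  exists T, T \subset ~: Y /\ cube Y T \subset C.
Proof.
case/not_shatters=> B BY H; exists B; split=> //; apply: cube_sub => Z ZY.
apply/negPn/negP => nC; have := H _ (_ : B :|: Z \in ~: C); rewrite inE => /(_ nC).
case/negP; apply/eqP/setP=> y; rewrite !inE.
move/subsetP: BY => /(_ y) /implyP; move/subsetP: ZY => /(_ y) /implyP; rewrite !inE.
by bsolve.
Qed.

Lemma ampleC C : ample C -> ample (~: C).
Proof.
move=> aC Y sh; apply: shat_strong; apply/negP; rewrite setCK => sh2.
have [T [TY cu]] := aC _ sh2.
by move: (strong_shat TY cu); rewrite setCK sh.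
Qed.

Lemma ample0 : ample (set0 : {set {set X}}).
Proof.
move=> Y /shattersP /(_ set0 (sub0set _)) [c]; by rewrite inE.
Qed.

Lemma ample_half C x b : ample C -> ample [set r in C | (x \in r) == b].
Proof.
move=> aC Y sh.
have xY : x \notin Y.
  apply/negP => xY.
  have [|r] := shatP sh [set z | (z == x) && ~~ b].
    by apply/subsetP=> z; rewrite inE => /andP[/eqP -> _].
  rewrite inE => /andP[_ /eqP rb] /setP /(_ x); rewrite !inE xY eqxx rb.
  by case: (b).
have shC : shatters C Y.
  apply/shattersP => B BY; have [r] := shatP sh B BY.
  by rewrite inE => /andP[rC _] rY; exists r.
have [T [TY cu]] := aC _ shC.
case Tb: ((x \in T) == b).
  exists T; split => //; apply: cube_sub => Z ZY.
  rewrite inE (cube_mem cu ZY) /= inE.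
  have -> : (x \in Z) = false by apply/negP => /(subsetP ZY); apply/negP.
  by rewrite orbF.
have shx : shatters C (x |: Y).
  apply/shattersP => B BxY; case Bb: ((x \in B) == b).
    have [|r] := shatP sh (B :\ x).
      apply/subsetP=> y; rewrite !inE => /andP[yx yB].
      by move/subsetP: BxY => /(_ y yB); rewrite !inE (negbTE yx).
    rewrite inE => /andP[rC /eqP rb] rY; exists r => //.
    apply/setP => y; rewrite !inE; case: (eqVneq y x) => [->|yx].
      by rewrite ?eqxx /= ?andbT rb; move/eqP: Bb.
    move/setP: rY => /(_ y); rewrite !inE yx /= => ->.
    move/subsetP: BxY => /(_ y); rewrite !inE (negbTE yx) /=.
    by case: (y \in B) => // /(_ isT) ->.
  exists (T :|: (B :\ x)).
    apply: cube_mem cu _; apply/subsetP=> y; rewrite !inE => /andP[yx yB].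
    by move/subsetP: BxY => /(_ y yB); rewrite !inE (negbTE yx).
  apply/setP => y; rewrite !inE; case: (eqVneq y x) => [->|yx].
    rewrite ?eqxx /= ?andbF ?orbF.
    by move: Tb Bb; case: (x \in T); case: (x \in B); case: (b).
  rewrite /=.
  move/subsetP: BxY => /(_ y) /implyP; move/subsetP: TY => /(_ y) /implyP.
  rewrite !inE (negbTE yx) /=; by bsolve.
have [T1 [T1Y cu1]] := aC _ shx.
have xT1 : x \notin T1 by move/subsetP: T1Y => /(_ x) /implyP; rewrite !inE eqxx; case: (x \in T1).
exists (if b then x |: T1 else T1); split.
  apply/subsetP => y; move/subsetP: T1Y => /(_ y) /implyP; rewrite !inE.
  case: (b); rewrite ?inE; case: (eqVneq y x) => [->|yx] //=; by move/implyP.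
apply: cube_sub => Z ZY.
have xZ : (x \in Z) = false by apply/negP => /(subsetP ZY); apply/negP.
rewrite inE; apply/andP; split; last by case: (b); rewrite !inE ?eqxx ?xZ ?(negbTE xT1).
have -> : (if b then x |: T1 else T1) :|: Z = T1 :|: (if b then x |: Z else Z).
  by case: (b); rewrite // setUCA setUA.
apply: cube_mem cu1 _; case: (b) => //; first by rewrite setUS.
by rewrite subsetU // ZY orbT.
Qed.

Lemma ample_seq C c (s : seq X) :
  ample C -> ample [set r in C | all (fun y => (y \in r) == (y \in c)) s].
Proof.
move=> aC; elim: s => [|y s IH].
  by have -> : [set r in C | all (fun y => (y \in r) == (y \in c)) [::]] = C
    by apply/setP=> r; rewrite !inE andbT.
have -> : [set r in C | all (fun y => (y \in r) == (y \in c)) (y :: s)] =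
  [set r in [set r in C | all (fun y => (y \in r) == (y \in c)) s] | (y \in r) == (y \in c)].
  by apply/setP=> r; rewrite !inE /= andbAC andbA.
exact: ample_half.
Qed.

Lemma ample_sub C c (K : {set X}) :
  ample C -> ample [set r in C | [forall y in K, (y \in r) == (y \in c)]].
Proof.
move=> aC; have := ample_seq (c:=c) (s:=enum K) aC.
have -> // : [set r in C | all (fun y => (y \in r) == (y \in c)) (enum K)] =
  [set r in C | [forall y in K, (y \in r) == (y \in c)]].
apply/setP=> r; rewrite !inE; congr (_ && _).
apply/allP/forall_inP => H y; first by move=> yK; apply: H; rewrite mem_enum.
by rewrite mem_enum; apply: H.
Qed.

Definition flipS c (V : {set X}) : {set X} := [set y | (y \in c) (+) (y \in V)].
Definition diffS c q : {set X} := [set y | (y \in c) != (y \in q)].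

Lemma flip_diff c r : r = flipS c (diffS c r).
Proof. by apply/setP => y; rewrite !inE; case: (y \in c); case: (y \in r). Qed.

Lemma neq_ex c q : c != q -> exists x, (x \in c) != (x \in q).
Proof.
move=> cq; case: (pickP (fun x => (x \in c) != (x \in q))) => [x hx|none].
  by exists x.
case/eqP: cq; apply/setP=> y; have := none y; by case: (y \in c); case: (y \in q).
Qed.

Lemma ample_nb C c q : ample C -> c \in C -> q \in C -> c != q ->
  exists2 x, (x \in c) != (x \in q) & flipS c [set x] \in C.
Proof.
move=> aC cC; move: {2}#|diffS c q| (leqnn #|diffS c q|) => k.
elim: k q => [|k IH] q.
  move=> hk _ cq; have [x hx] := neq_ex cq.
  have h0 : 0 < #|diffS c q| by apply/card_gt0P; exists x; rewrite inE.
  by move: h0; rewrite lt0n -leqn0 hk.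
move=> hk qC cq.
pose E := diffS c q.
pose C' := [set r in C | [forall y in ~: E, (y \in r) == (y \in c)]].
have qC' : q \in C'.
  rewrite inE qC; apply/forall_inP => y; rewrite !inE negbK => /eqP ->; exact: eqxx.
have cC' : c \in C' by rewrite inE cC; apply/forall_inP => y _; exact: eqxx.
case: (pickP (fun r => [&& r \in C', r != c & r != q])) => [r /and3P[rC' rc rq]|none].
  move: rC'; rewrite inE => /andP[rC /forall_inP agr].
  have sub : diffS c r \proper E.
    rewrite properEneq; apply/andP; split.
      apply: contra rq => /eqP dE; apply/eqP/setP => y.
      move/setP: dE => /(_ y); rewrite !inE.
      by case: (y \in c); case: (y \in r); case: (y \in q).
    apply/subsetP => y; rewrite !inE; apply: contraR => ye.
    by have := agr y; rewrite !inE ye => /(_ isT) /eqP ->; rewrite eqxx.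
  have rc' : c != r by rewrite eq_sym.
  have [|x xd xC] := IH r _ rC rc'.
    by rewrite -ltnS; apply: leq_trans (proper_card sub) hk.
  exists x => //; have := proper_sub sub => /subsetP /(_ x); rewrite !inE; exact.
have [x xE] := neq_ex cq.
have sh : shatters C' [set x].
  apply/shattersP => B Bx.
  exists (if (x \in B) == (x \in c) then c else q); first by case: ifP.
  apply/setP => y; rewrite !inE; case: (eqVneq y x) => [->|yx].
    by move: xE; case: ifP; case: (x \in B); case: (x \in c); case: (x \in q).
  rewrite andbF; apply/esym/negP => yB.
  by move/subsetP: Bx => /(_ y yB); rewrite inE (negbTE yx).
have [T0 [T0x cu]] := ample_sub (c:=c) (K:= ~: E) aC sh.
have T0C : T0 \in C' by rewrite -[T0]setU0; apply: cube_mem cu (sub0set _).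
have xT0C : x |: T0 \in C' by rewrite setUC; apply: cube_mem cu (subxx _).
have xT0 : x \notin T0 by move/subsetP: T0x => /(_ x) /implyP; rewrite !inE eqxx; case: (x \in T0).
have h1 := none T0; have h2 := none (x |: T0); rewrite /= T0C in h1; rewrite /= xT0C in h2.
exists x => //.
have -> : flipS c [set x] = q; last by [].
have xx : x \in x |: T0 by rewrite !inE eqxx.
case: (eqVneq T0 c) h1 => [eT|nT] h1.
  case: (eqVneq (x |: T0) q) h2 => [eq|nq] h2; last first.
    by move: h2; rewrite /= andbT; case: eqVneq => // e2; move: xT0; rewrite eT -e2 xx.
  rewrite -eq -eT; apply/setP => y; rewrite !inE; case: (eqVneq y x) => [->|yx] //=.
    by rewrite (negbTE xT0).
  by rewrite addbF.
case: (eqVneq T0 q) h1 => [eT|nq] h1; last by move: h1.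
case: (eqVneq (x |: T0) c) h2 => [ec|nc] h2; last first.
  by move: h2; rewrite /=; case: eqVneq => // e2; move: xT0; rewrite eT -e2 xx.
rewrite -eT -ec; apply/setP => y; rewrite !inE; case: (eqVneq y x) => [->|yx] //=.
  by rewrite (negbTE xT0).
by rewrite addbF.
Qed.

Lemma ampleU C c : ample C -> c \notin C ->
  (forall p, p \in C -> exists2 x, (x \in p) != (x \in c) & flipS c [set x] \in C) ->
  ample (c |: C).
Proof.
move=> aC cC S Y sh.
case shC: (shatters C Y).
  have [T [TY cu]] := aC _ shC; exists T; split => //.
  exact: subset_trans cu (subsetUr _ _).
have F0 : forall B, B \subset Y -> B != c :&: Y -> exists2 p, p \in C & p :&: Y = B.
  move=> B BY Bc; have [p] := shatP sh B BY; case/setU1P => [->|pC] pY.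
    by rewrite pY eqxx in Bc.
  by exists p.
have F0' : forall p, p \in C -> p :&: Y != c :&: Y.
  move=> p pC; apply/negP => /eqP pY; move/negP: shC; apply; apply/shattersP => B BY.
  case: (eqVneq B (c :&: Y)) => [->|Bc]; first by exists p.
  exact: F0.
have F1 : forall y, y \in Y -> flipS c [set y] \in C.
  move=> y yY.
  have BY : flipS (c :&: Y) [set y] \subset Y.
    apply/subsetP=> z; rewrite !inE; case: (eqVneq z y) => [->|zy] //=.
    by rewrite addbF => /andP[].
  have Bc : flipS (c :&: Y) [set y] != c :&: Y.
    apply/negP => /eqP /setP /(_ y); rewrite !inE eqxx yY andbT.
    by case: (y \in c).
  have [p pC pY] := F0 _ BY Bc.
  have [x xpc xC] := S p pC.
  case xY: (x \in Y).
    have : x == y.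
      move/setP: pY => /(_ x); rewrite !inE xY andbT => px.
      move: xpc; rewrite px; case: (x == y) => //.
      by rewrite andbT addbF eqxx.
    by move/eqP => <-.
  move: (F0' _ xC) => /negP; case; apply/eqP/setP => z; rewrite !inE.
  case: (eqVneq z x) => [->|zx]; first by rewrite xY !andbF.
  by rewrite addbF.
have Main : forall k V, #|V| <= k -> V \subset Y -> 0 < #|V| -> flipS c V \in C.
  elim=> [|k IH] V Vk VY V0; first by move: V0; rewrite lt0n -leqn0 Vk.
  case V1: (#|V| == 1).
    case/cards1P: V1 => v Vv; rewrite Vv; apply: F1.
    by move/subsetP: VY; apply; rewrite Vv set11.
  case fin: (flipS c V \in C) => //.
  have V2 : 1 < #|V| by rewrite ltn_neqAle eq_sym V1 V0.
  have IHf : forall r, (forall y, y \notin V -> (y \in r) = (y \in c)) -> r != c ->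
      r != flipS c V -> r \in C.
    move=> r agr rc rV.
    have sub : diffS c r \proper V.
      rewrite properEneq; apply/andP; split.
        apply: contra rV => /eqP dE; apply/eqP/setP => y.
        move/setP: dE => /(_ y); rewrite !inE => <-.
        by case: (y \in c); case: (y \in r).
      apply/subsetP => y; rewrite !inE; apply: contraR => yV.
      by rewrite (agr _ yV) eqxx.
    have -> : r = flipS c (diffS c r).
      by apply/setP => y; rewrite !inE; case: (y \in c); case: (y \in r).
    apply: IH.
    - by rewrite -ltnS; apply: leq_trans (proper_card sub) Vk.
    - exact: subset_trans (proper_sub sub) VY.
    - have rc' : c != r by rewrite eq_sym.
      have [x hx] := neq_ex rc'.
      by apply/card_gt0P; exists x; rewrite inE.
  have [z zV] : exists z, z \in V by apply/card_gt0P.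
  pose Y' := V :\ z.
  pose C' := [set r in C | [forall y in ~: V, (y \in r) == (y \in c)]].
  have aC' : ample C' := ample_sub (c:=c) (K := ~: V) aC.
  have shY' : shatters C' Y'.
    apply/shattersP => B BY'.
    pose b := if B == Y' :\: c then (z \in c) else ~~ (z \in c).
    pose q := [set y | if y \in V then (if y == z then b else y \in B) else y \in c].
    have qagr : forall y, y \notin V -> (y \in q) = (y \in c).
      by move=> y yV; rewrite inE (negbTE yV).
    have Bz : forall y, y \in B -> (y != z) && (y \in V).
      by move=> y /(subsetP BY'); rewrite !inE.
    have qc : q != c.
      move: (erefl b); rewrite {2}/b; case: eqP => [BE|BE] bE.
        have [y yY'] : exists y, y \in Y'.
          by apply/card_gt0P; rewrite /Y' (cardsD1 z V) zV add1n ltnS in V2.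
        apply/negP => /eqP /setP /(_ y); move: yY'; rewrite !inE => /andP[yz yV].
        rewrite yV (negbTE yz) BE !inE yz yV /=; by case: (y \in c).
      apply/negP => /eqP /setP /(_ z); rewrite !inE zV eqxx bE; by case: (z \in c).
    have qV : q != flipS c V.
      move: (erefl b); rewrite {2}/b; case: eqP => [BE|BE] bE.
        apply/negP => /eqP /setP /(_ z); rewrite !inE zV eqxx bE; by case: (z \in c).
      have BE' : B != Y' :\: c by apply/eqP.
      have [y hy] := neq_ex BE'.
      have yV : (y != z) && (y \in V).
        move: hy; case yB: (y \in B); first by move=> _; apply: Bz.
        by rewrite /Y' !inE; case: (y \in c); case: (y != z); case: (y \in V).
      move/andP: yV => [yz yV].
      apply/negP => /eqP /setP /(_ y); move: hy; rewrite /Y' !inE yV (negbTE yz) /=.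
      by case: (y \in B); case: (y \in c).
    exists q.
      rewrite inE (IHf _ qagr qc qV) /=; apply/forall_inP => y; rewrite inE => yV.
      by rewrite qagr.
    apply/setP => y; rewrite !inE; case: (eqVneq y z) => [->|yz] /=.
      rewrite andbF; apply/esym/negP => /Bz; by rewrite eqxx.
    case yV: (y \in V) => /=; first by rewrite andbT.
    by rewrite andbF; apply/esym/negP => /Bz; rewrite yV andbF.
  have [T0 [T0Y cu]] := aC' _ shY'.
  have T0z : forall y, y \in T0 -> y \notin Y' by move=> y /(subsetP T0Y); rewrite inE.
  have e1C : T0 :|: (c :&: Y') \in C' by apply: cube_mem cu (subsetIr _ _).
  have e2C : T0 :|: (Y' :\: c) \in C' by apply: cube_mem cu (subsetDl _ _).
  move: e1C e2C; rewrite !inE => /andP[e1C /forall_inP a1] /andP[e2C /forall_inP a2].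
  case: (eqVneq (z \in T0) (z \in c)) => hz.
    have e1 : T0 :|: (c :&: Y') = c.
      apply/setP => y; case yV: (y \in V); last first.
        by apply/eqP; apply: a1; rewrite inE yV.
      rewrite !inE yV; case: (eqVneq y z) => [->|yz] /=; first by rewrite andbF orbF hz.
      case yT: (y \in T0) => /=; last by rewrite andbT.
      by move: (T0z _ yT); rewrite !inE yz yV.
    by move: cC; rewrite -e1 e1C.
  have e2 : T0 :|: (Y' :\: c) = flipS c V.
    apply/setP => y; case yV: (y \in V); last first.
      by rewrite [RHS]inE yV addbF; apply/eqP; apply: a2; rewrite inE yV.
    rewrite !inE yV; case: (eqVneq y z) => [->|yz] /=.
      by rewrite andbF orbF; move: hz; case: (z \in T0); case: (z \in c).
    case yT: (y \in T0) => /=; last by rewrite andbT addbT.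
    by move: (T0z _ yT); rewrite !inE yz yV.
  by move: fin; rewrite -e2 e2C.
exists (c :\: Y); split; first by apply/subsetP => y; rewrite !inE => /andP[].
apply: cube_sub => Z ZY.
set e := (c :\: Y) :|: Z.
case: (eqVneq e c) => [ec | ec]; first by rewrite ec setU11.
apply/setU1P; right.
have -> : e = flipS c (diffS c e) := flip_diff c e.
apply: (Main #|diffS c e|) => //.
  apply/subsetP => y; rewrite !inE; apply: contraR => yY.
  have yZ : y \notin Z by apply: contra yY; apply: (subsetP ZY).
  by rewrite (negbTE yZ) yY /= orbF eqxx.
have [x hx] := neq_ex ec; apply/card_gt0P; exists x; rewrite inE eq_sym //.
Qed.

Definition Sc (s : seq {set X}) c :=
  forall p, p \in s -> exists2 x, (x \in p) != (x \in c) & flipS c [set x] \in s.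

Lemma nth_notin_take (T : eqType) (x0 : T) (s : seq T) i :
  uniq s -> i < size s -> nth x0 s i \notin take i s.
Proof.
move=> us hi; move: us; rewrite -{1}(cat_take_drop i s) (drop_nth x0 hi) cat_uniq.
by case/and3P => _ /hasPn /(_ (nth x0 s i)); rewrite in_cons eqxx => /(_ isT).
Qed.

Lemma set_rcons (t : seq {set X}) a : [set c in rcons t a] = a |: [set c in t].
Proof. by apply/setP => c; rewrite !inE mem_rcons in_cons. Qed.

Lemma prefix_ample cs : uniq cs ->
  (forall j, 0 < j < size cs -> Sc (take j cs) (nth set0 cs j)) ->
  forall i, i <= size cs -> ample [set c in take i cs].
Proof.
move=> u H; elim=> [|i IH] hi.
  have -> : [set c in take 0 cs] = set0 by apply/setP => c; rewrite !inE take0.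
  exact: ample0.
rewrite (take_nth set0 hi) set_rcons; apply: ampleU.
- exact: IH (ltnW hi).
- by rewrite inE; apply: nth_notin_take.
- move=> p; rewrite inE => pin.
  case: i pin hi {IH} => [|i] pin hi; first by rewrite take0 in pin.
  have [x hx hf] := H i.+1 hi p pin; exists x => //; by rewrite inE.
Qed.

Lemma prefix_S cs : uniq cs ->
  (forall i, 0 < i <= size cs -> ample [set c in take i cs]) ->
  forall j, j < size cs -> Sc (take j cs) (nth set0 cs j).
Proof.
move=> u H j hj p pin.
have aC := H j.+1 hj; rewrite (take_nth set0 hj) set_rcons in aC.
have nn := nth_notin_take set0 u hj.
have cp : nth set0 cs j != p by apply: contra nn => /eqP ->.
have pC : p \in [set c in take j cs] by rewrite inE.
have [x hx] := ample_nb aC (setU11 _ _) (setU1r _ pC) cp.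
case/setU1P => [e|hin].
  by move/setP: e => /(_ x); rewrite !inE eqxx; case: (x \in nth set0 cs j).
by exists x; [rewrite eq_sym | move: hin; rewrite inE].
Qed.
End AmpleTheory.

Lemma aux m k : m.-1 + k = m -> 0 < k -> k == 1.
Proof. by move=> h1 h2; apply/eqP; lia. Qed.

Section Facets.
Variable n : nat.
Local Notation pmX := ('I_n * bool)%type.
Implicit Types (c p r : {set 'I_n}) (sg tau rho : {set pmX}).

Definition conc sg : {set 'I_n} := [set i | (i, true) \in sg].
Definition fac c : {set pmX} := [set ib | ib.2 == (ib.1 \in c)].

Lemma fac_facet c : cp_facet (fac c).
Proof. by apply/forallP => i; rewrite !inE /=; case: (i \in c). Qed.

Lemma conc_fac c : conc (fac c) = c.
Proof. by apply/setP => i; rewrite !inE /=; case: (i \in c). Qed.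

Lemma fac_conc sg : cp_facet sg -> fac (conc sg) = sg.
Proof.
move=> /forallP H; apply/setP => [[i b]]; rewrite !inE /=; have := H i.
by case: b; case: ((i, true) \in sg); case: ((i, false) \in sg).
Qed.

Lemma card_facI c r : #|fac c :&: fac r| = #|[set i | (i \in c) == (i \in r)]|.
Proof.
have -> : fac c :&: fac r = [set (i, i \in c) | i in [set i | (i \in c) == (i \in r)]].
  apply/setP => [[i b]]; rewrite !inE /=; apply/andP/imsetP.
    move=> [/eqP -> /eqP e]; exists i => //; by rewrite inE e.
  by case=> j; rewrite inE => /eqP e [-> ->]; rewrite /= e !eqxx.
by apply: card_imset => i j [].
Qed.

Lemma fac_flip c x : #|fac c :&: fac (flipS c [set x])| = n.-1.
Proof.
rewrite card_facI -[n in n.-1]card_ord -(cardsC1 x); apply: eq_card => i.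
by rewrite !inE; case: (i \in c); case: (i == x).
Qed.

Lemma step_equiv (u : seq {set pmX}) j :
  all (@cp_facet n) u -> uniq u -> j < size u ->
  (Sc (take j (map conc u)) (nth set0 (map conc u) j) <->
   pure_codim1 (inter_family (take j u) (nth set0 u j))).
Proof.
move=> /allP hu uu hj.
have facu : forall sg, sg \in u -> fac (conc sg) = sg by move=> sg /hu; apply: fac_conc.
have sjin : nth set0 u j \in u by apply: mem_nth.
set sj := nth set0 u j.
rewrite (nth_map set0 _ _ hj) -map_take -/sj.
set c := conc sj.
have sjE : sj = fac c by rewrite facu.
clearbody c.
have sjnot : sj \notin take j u by apply: nth_notin_take.
split.
  move=> S tau /maxsetP [tF tmax].
  move: (tF); rewrite inE => /andP[tsj /hasP[rho0 rho0in trho0]].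
  have rho0E : rho0 = fac (conc rho0) by rewrite facu // (mem_take rho0in).
  have [x hx] := S (conc rho0) (map_f _ rho0in).
  case/mapP => rho rhoin rhoE.
  have rhoF : rho = fac (flipS c [set x]) by rewrite rhoE facu // (mem_take rhoin).
  have tsub : tau \subset sj :&: rho.
    apply/subsetP => [[i b]] hib; rewrite inE (subsetP tsj _ hib) /=.
    move: (subsetP tsj _ hib) (subsetP trho0 _ hib).
    rewrite {1}sjE {1}rho0E rhoF !inE /= => /eqP -> /eqP e.
    case: (eqVneq i x) => [ix|]; last by rewrite addbF.
    by move: hx; rewrite -ix /conc inE -e eqxx.
  have iF : sj :&: rho \in inter_family (take j u) sj.
    rewrite inE subsetIl /=; apply/hasP; exists rho => //; exact: subsetIr.
  by rewrite -(tmax _ iF tsub) sjE rhoF fac_flip.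
move=> P p; case/mapP => sgi sgiin ->.
have sgiE : sgi = fac (conc sgi) by rewrite facu // (mem_take sgiin).
have t0F : sj :&: sgi \in inter_family (take j u) sj.
  rewrite inE subsetIl /=; apply/hasP; exists sgi => //; exact: subsetIr.
have [tau tmaxs t0sub] := maxset_exists t0F.
have tcard := P _ tmaxs.
move/maxsetP: tmaxs => [tF tmax].
have tF' : tau \in inter_family (take j u) sj := tF.
move: (tF'); rewrite inE => /andP[tsj /hasP[rho rhoin trho]].
have tsub : tau \subset sj :&: rho by rewrite subsetI tsj trho.
have iF : sj :&: rho \in inter_family (take j u) sj.
  rewrite inE subsetIl /=; apply/hasP; exists rho => //; exact: subsetIr.
have rhoE : rho = fac (conc rho) by rewrite facu // (mem_take rhoin).
set r := conc rho in rhoE.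
have rdef : r = conc rho by [].
clearbody r.
have cI : #|[set i | (i \in c) == (i \in r)]| = n.-1.
  by rewrite -card_facI -sjE -rhoE (tmax _ iF tsub).
have cr : c != r.
  apply: contra sjnot => /eqP e; by rewrite sjE e -rhoE.
have [x0 hx0] := neq_ex cr.
have cC := cardsC [set i | (i \in c) == (i \in r)].
rewrite card_ord cI in cC.
have pos : 0 < #|~: [set i | (i \in c) == (i \in r)]|.
  by apply/card_gt0P; exists x0; rewrite !inE hx0.
have : #|~: [set i | (i \in c) == (i \in r)]| == 1 by move: cC pos; apply: aux.
case/cards1P => x hx.
have xd : forall i, ((i \in c) != (i \in r)) = (i == x).
  by move=> i; move/setP: hx => /(_ i); rewrite !inE.
exists x.
  apply/negP => /eqP e.
  have : (x, x \in c) \in tau.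
    apply: (subsetP t0sub); rewrite inE {1}sjE sgiE !inE /= eqxx /=.
    by rewrite -e /conc inE eqxx.
  move/(subsetP trho); rewrite rhoE inE /= => e2.
  by move: (xd x); rewrite e2 eqxx.
have -> : flipS c [set x] = r.
  apply/setP => i; rewrite !inE -xd; by case: (i \in c); case: (i \in r).
by rewrite rdef; apply: map_f.
Qed.

End Facets.

Theorem corollary4p4 :
  (forall (X : finType) (C : {set {set X}}), ample C -> dismantlable C) ->
  forall n : nat, extendably_shellable n.
Proof.
move=> H n s [hall hu hstep].
pose cs := map (@conc n) s.
have injc : {in s &, injective (@conc n)}.
  move=> a b ain bin e.
  by rewrite -(fac_conc (allP hall a ain)) -(fac_conc (allP hall b bin)) e.
have ucs : uniq cs by rewrite map_inj_in_uniq.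
have Scs : forall j, 0 < j < size cs -> Sc (take j cs) (nth set0 cs j).
  move=> j /andP[j0 hj]; rewrite size_map in hj.
  apply: (proj2 (step_equiv hall hu hj)); apply: hstep; by rewrite j0 hj.
have aP : ample [set c in cs].
  by have := prefix_ample ucs Scs (leqnn _); rewrite take_size.
have aD := ampleC aP.
have [d [ud memd dpre]] := H _ _ aD.
have dnotP : forall c, c \in d -> c \notin cs by move=> c; rewrite memd !inE.
pose t := map (@fac n) (rev d).
exists t.
have cst : map (@conc n) (s ++ t) = cs ++ rev d.
  by rewrite map_cat -map_comp (eq_map (@conc_fac n)) map_id.
have hall' : all (@cp_facet n) (s ++ t).
  by rewrite all_cat hall /=; apply/allP => sg /mapP [c _ ->]; apply: fac_facet.
have hu' : uniq (s ++ t).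
  rewrite cat_uniq hu /=; apply/andP; split.
    apply/hasPn => sg /mapP [c cd ->]; apply/negP => fin.
    have := map_f (@conc n) fin; rewrite conc_fac => ccs.
    by move: cd; rewrite mem_rev => /dnotP; rewrite ccs.
  rewrite map_inj_uniq ?rev_uniq // => a b e.
  by rewrite -(conc_fac a) e conc_fac.
have ucs' : uniq (cs ++ rev d).
  rewrite cat_uniq ucs rev_uniq ud andbT /=; apply/hasPn => c.
  by rewrite mem_rev => /dnotP.
have pre : forall i, 0 < i <= size (cs ++ rev d) -> ample [set c in take i (cs ++ rev d)].
  move=> i /andP[i0 hi]; rewrite take_cat; case: ifP => hlt.
    by apply: (prefix_ample ucs Scs); apply: ltnW; rewrite hlt.
  set k := i - size cs; set m := size d - k.
  have -> : [set c in cs ++ take k (rev d)] = ~: [set c in take m d].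
    have ud' := ud; rewrite -(cat_take_drop m d) cat_uniq in ud'.
    case/and3P: ud' => _ /hasPn dis _.
    apply/setP => c; rewrite in_setC !in_set mem_cat take_rev mem_rev -/m.
    case cin: (c \in cs) => /=.
      by apply/esym/negP => /mem_take /dnotP; rewrite cin.
    have : c \in d by rewrite memd !inE cin.
    rewrite -{1}(cat_take_drop m d) mem_cat.
    case cdr: (c \in drop m d); first by rewrite (negbTE (dis _ cdr)).
    by rewrite orbF => ->.
  apply: ampleC; case m0: (m == 0).
    move/eqP: m0 => ->; rewrite take0.
    have -> : [set c in [::]] = set0 :> {set {set 'I_n}} by apply/setP => c; rewrite !inE.
    exact: ample0.
  apply: dpre; rewrite lt0n m0 /=; exact: leq_subr.
have Scs' := prefix_S ucs' pre.
split.
  split => // j /andP[j0 hj].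
  apply: (proj1 (step_equiv hall' hu' hj)); rewrite cst; apply: Scs'.
  by rewrite -cst size_map.
move=> sg fsg; have sgE := fac_conc fsg.
case cin: (conc sg \in cs).
  case/mapP: cin => sg' sg'in e.
  have := fac_conc (allP hall _ sg'in); rewrite -e sgE => ->.
  by rewrite mem_cat sg'in.
have : conc sg \in d by rewrite memd !inE cin.
rewrite -mem_rev => /(map_f (@fac n)); rewrite sgE => hin.
by rewrite mem_cat hin orbT.
Qed.
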